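(* Let $K\ge 2$ and $p\in(0,1)$. For every $f\in\mathcal M_p$ with $\sigma_f$ equal to the identity, $$\sum_{r=1}^{K-1}D(f,r)\;\le\;C(K,p):=\sum_{r=1}^{K-2}\frac{(1-p)p^{K-r}}{(K-r)p^{K-r+1}-(K-r+1)p^{K-r}+1}+\frac{1+p}{1-p},$$ with equality when $f=f^{\mathrm{OA}}_{\mathrm{id}}$. Consequently $\min_{f}I^{\mathrm N}(f)=I^{\mathrm N}(f^{\mathrm{OA}}_{\mathrm{id}})=\log(1/p)/C(K,p)$ (minimum over $f\in\mathcal M_p$ with identity ranking), and moreover $$\frac{\log(1/p)}{C(K,p)}=(1-p)\log\!\Big(\frac1p\Big)\Big(1+\sum_{j=2}^{K}\frac{p^{j-1}}{1+2p+\cdots+(j-1)p^{j-2}}\Big)^{-1}.$$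
   Context: Items are $[K]=\{1,\dots,K\}$, $\mathcal S=\{S\subseteq[K]:|S|\ge2\}$, and $[n]=\{1,\dots,n\}$. A preference $f$ is a family of numbers $f(i\mid S)$, $S\in\mathcal S$, $i\in[K]$. For $p\in(0,1)$, the $p$-Separable family $\mathcal M_p$ consists of all $f$ such that (i) $f(i\mid S)>0$ iff $i\in S$; (ii) $\sum_{i\in S}f(i\mid S)=1$; (iii) there is a bijection $\sigma_f:[K]\to[K]$ (the ranking) such that for all $S\in\mathcal S$ and $i,i'\in S$ with $\sigma_f(i')<\sigma_f(i)$, $f(i\mid S)\le p\,f(i'\mid S)$. When $\sigma_f$ is the identity this says $f(i\mid S)\le p f(i'\mid S)$ whenever $i'<i$ in $S$. Hardness quantity (for $\sigma_f$ the identity): for $r\in[K-1]$, $i\in[r-1]$ let $\Delta^i_{K-r+1}=f(K-r+1\mid[K-i+1])-f(K-r+2\mid[K-i+1])$; $D(f,1)=\frac{1}{1-Kf(K\mid[K])}$ and for $r\in\{2,\dots,K-1\}$, $D(f,r)=\frac{(K-r+1)\sum_{i=1}^{r-1}\Delta^i_{K-r+1}D(f,i)}{1-(K-r+1)f(K-r+1\mid[K-r+1])}$; $I^{\mathrm N}(f)=\log(1/p)\big[\sum_{r=1}^{K-1}D(f,r)\big]^{-1}$. Ordinal Attraction (OA) preference: for a bijection $\sigma:[K]\to[K]$ and $S\in\mathcal S$, $i\in S$, let $\sigma(i\mid S)=1+|\{j\in S:\sigma(j)<\sigma(i)\}|$ be the local rank of $i$ in $S$, and $f^{\mathrm{OA}}_\sigma(i\mid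 S)=\frac{1-p}{1-p^{|S|}}p^{\sigma(i\mid S)-1}$ for $i\in S$ (and $0$ for $i\notin S$). $f^{\mathrm{OA}}_{\mathrm{id}}$ denotes the OA preference for the identity ranking. *)

(* Defs.v *)
From HB Require Import structures.
From mathcomp Require Import all_boot all_order fingroup perm.
From mathcomp Require Import all_algebra.
From mathcomp Require Import reals exp.
Set Implicit Arguments. Unset Strict Implicit. Unset Printing Implicit Defensive.
Import Order.TTheory GRing.Theory Num.Theory.
Local Open Scope ring_scope.

(* Items [K] = {1,...,K} are represented by 'I_K (item i <-> ordinal i-1).
   A preference is a total function f : {set 'I_K} -> 'I_K -> R; only its
   values on sets S with #|S| >= 2 matter (the family f(i|S), S in cal S). *)
Definition pref (R : realType) (K : nat) := {set 'I_K} -> 'I_K -> R.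

Definition pSeparable_with (R : realType) (K : nat) (p : R)
    (f : pref R K) (sigma : {perm 'I_K}) : Prop :=
  [/\ (forall S : {set 'I_K}, (2 <= #|S|)%N -> forall i, (0 < f S i) <-> (i \in S)),
      (forall S : {set 'I_K}, (2 <= #|S|)%N -> \sum_(i in S) f S i = 1) &
      (forall S : {set 'I_K}, (2 <= #|S|)%N -> forall i i' : 'I_K,
          i \in S -> i' \in S -> (sigma i' < sigma i)%N -> f S i <= p * f S i')].

Definition in_Mp (R : realType) (K : nat) (p : R) (f : pref R K) : Prop :=
  exists sigma : {perm 'I_K}, pSeparable_with p f sigma.

Definition in_Mp_id (R : realType) (K : nat) (p : R) (f : pref R K) : Prop :=
  pSeparable_with p f 1%g.

Definition prefix_set (K m : nat) : {set 'I_K} := [set j : 'I_K | (j < m)%N].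

(* F f m i = f(i | [m]) with 1-based item index i (0 if i is not an item). *)
Definition F (R : realType) (K : nat) (f : pref R K) (m i : nat) : R :=
  oapp (f (prefix_set K m)) 0 (insub i.-1 : option 'I_K).

(* Delta^i_{K-r+1} = f(K-r+1 | [K-i+1]) - f(K-r+2 | [K-i+1]) *)
Definition Delta (R : realType) (K : nat) (f : pref R K) (i r : nat) : R :=
  F f (K - i + 1) (K - r + 1) - F f (K - i + 1) (K - r + 2).

Definition Dstep (R : realType) (K : nat) (f : pref R K) (r : nat)
    (g : nat -> R) : R :=
  if r == 1%N then 1 / (1 - K%:R * F f K K)
  else ((K - r + 1)%:R * \sum_(1 <= i < r) Delta f i r * g i)
       / (1 - (K - r + 1)%:R * F f (K - r + 1) (K - r + 1)).

Fixpoint Dtab (R : realType) (K : nat) (f : pref R K) (n : nat) : nat -> R :=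
  match n with
  | 0 => fun _ => 0
  | n'.+1 => let g := Dtab f n' in fun r => if (r <= n')%N then g r else Dstep f r g
  end.

Definition D (R : realType) (K : nat) (f : pref R K) (r : nat) : R := Dtab f r r.

Definition IN (R : realType) (K : nat) (p : R) (f : pref R K) : R :=
  ln (1 / p) / (\sum_(1 <= r < K) D f r).

Definition local_rank (K : nat) (sigma : {perm 'I_K}) (S : {set 'I_K}) (i : 'I_K) : nat :=
  (1 + #|[set j in S | (sigma j < sigma i)%N]|)%N.

Definition fOA (R : realType) (K : nat) (p : R) (sigma : {perm 'I_K}) : pref R K :=
  fun S i => if i \in S then (1 - p) / (1 - p ^+ #|S|) * p ^+ (local_rank sigma S i).-1
             else 0.

Definition CKp (R : realType) (K : nat) (p : R) : R :=
  \sum_(1 <= r < K - 1)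
     ((1 - p) * p ^+ (K - r)
      / ((K - r)%:R * p ^+ (K - r + 1) - (K - r + 1)%:R * p ^+ (K - r) + 1))
  + (1 + p) / (1 - p).

Arguments fOA {R} K p sigma _ _.

(* Main.v *)
Require Import Defs.
From HB Require Import structures.
From mathcomp Require Import all_boot all_order fingroup perm.
From mathcomp Require Import all_algebra.
From mathcomp Require Import reals exp.
From mathcomp Require Import ring lra zify.
Set Implicit Arguments. Unset Strict Implicit. Unset Printing Implicit Defensive.
Import Order.TTheory GRing.Theory Num.Theory.
Local Open Scope ring_scope.



Definition hC (R : realType) (p : R) (m : nat) : R :=
  (1 - p) * p ^+ m / (m%:R * p ^+ (m + 1) - (m + 1)%:R * p ^+ m + 1).

Definition bet (R : realType) (p : R) (m : nat) : R :=
  m%:R * p ^+ (m + 1) - (m + 1)%:R * p ^+ m + 1.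

Lemma bet_ge (R : realType) (p : R) (m : nat) : 0 < p < 1 -> (1 <= m)%N ->
  (1 - p) ^+ 2 <= bet p m.
Proof.
move=> /andP[p0 p1]; elim: m => [//|m IH] _.
case: m IH => [_|m IH].
  rewrite /bet /= expr1 mul1r; nra.
have H := IH isT.
have E : bet p m.+2 = bet p m.+1 + (m.+2)%:R * p ^+ m.+1 * (1 - p) ^+ 2.
  rewrite /bet !addn1 !exprS -!natr1; ring.
rewrite E; have : 0 <= (m.+2)%:R * p ^+ m.+1 * (1 - p) ^+ 2.
  apply: mulr_ge0; last exact: sqr_ge0.
  apply: mulr_ge0 => //; apply: exprn_ge0; exact: ltW.
lra.
Qed.

Lemma bet_gt0 (R : realType) (p : R) (m : nat) : 0 < p < 1 -> (1 <= m)%N -> 0 < bet p m.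
Proof.
move=> hp hm; have := bet_ge hp hm; move: hp => /andP[p0 p1].
have : 0 < (1 - p) ^+ 2 by apply: exprn_gt0; lra.
lra.
Qed.

Definition Cs (R : realType) (p : R) (n : nat) : R :=
  if (n <= 1)%N then 1 else \sum_(2 <= m < n) hC p m + (1 + p) / (1 - p).
Definition Xs (R : realType) (p : R) (n : nat) : R :=
  if (n <= 1)%N then 0 else n%:R * Cs p n.
Definition ds (R : realType) (p : R) (k : nat) : R := Xs p k - Xs p k.-1.
Definition Gs (R : realType) (p : R) (j : nat) : R := \sum_(1 <= k < j.+1) p ^+ k.-1.

Lemma hC_ge0 (R : realType) (p : R) (m : nat) : 0 < p < 1 -> (1 <= m)%N -> 0 <= hC p m.
Proof.
move=> hp hm; have := bet_gt0 hp hm; move: hp => /andP[p0 p1] hb.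
rewrite /hC -/(bet p m); apply: divr_ge0; last exact: ltW.
apply: mulr_ge0; first lra. apply: exprn_ge0; exact: ltW.
Qed.

Lemma Cs_rec (R : realType) (p : R) (n : nat) : (2 <= n)%N -> Cs p n.+1 = Cs p n + hC p n.
Proof.
move=> hn; rewrite /Cs ifF; last by case: n hn => [|[]].
rewrite ifF; last by case: n hn => [|[]].
rewrite big_nat_recr //=; ring.
Qed.

Lemma Cs2 (R : realType) (p : R) : Cs p 2 = (1 + p) / (1 - p).
Proof. by rewrite /Cs /= big_geq // add0r. Qed.

Lemma Cs_step (R : realType) (p : R) (n : nat) : 0 < p < 1 -> (1 <= n)%N -> Cs p n <= Cs p n.+1.
Proof.
move=> hp; case: n => [//|[|n]] _.
  rewrite Cs2 /Cs /=; move: hp => /andP[p0 p1].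
  rewrite ler_pdivlMr; lra.
by rewrite (@Cs_rec _ _ n.+2) // lerDl; apply: hC_ge0.
Qed.

Lemma Cs_mono (R : realType) (p : R) (j n : nat) : 0 < p < 1 -> (1 <= j)%N -> (j <= n)%N -> Cs p j <= Cs p n.
Proof.
move=> hp hj; elim: n => [|n IH]; first by rewrite leqn0 => /eqP E; rewrite E in hj.
rewrite leq_eqVlt => /orP[/eqP -> //|]; rewrite ltnS => hjn.
apply: le_trans (IH hjn) _; apply: Cs_step => //; exact: leq_trans hjn.
Qed.

Lemma Gs_closed (R : realType) (p : R) (j : nat) : (1 - p) * Gs p j = 1 - p ^+ j.
Proof.
elim: j => [|j IH]; first by rewrite /Gs big_geq // mulr0 expr0 subrr.
rewrite /Gs big_nat_recr //= mulrDr -/(Gs p j) IH exprS; match goal with |- ?g => idtac g end; ring.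
Qed.

Lemma ds_ident (R : realType) (p : R) (j : nat) : 0 < p < 1 -> (1 <= j)%N ->
  \sum_(1 <= k < j.+1) ds p k * p ^+ k.-1 = (Cs p j - 1) * Gs p j.
Proof.
move=> hp; move: (hp) => /andP[p0 p1].
have p1' : 1 - p != 0 by apply/eqP; lra.
elim: j => [//|j IH] _.
case: j IH => [_|j IH].
  by rewrite big_nat1 /ds /Xs /= /Cs /= !subrr !mul0r.
match goal with |- ?g => idtac g end.
rewrite big_nat_recr //= IH //.
case: j IH => [_|j IH].
  rewrite (_ : Cs p 1 = 1) // subrr mul0r add0r /ds /Xs /= Cs2 /Gs big_nat_recr //= big_nat1 /= expr1 expr0 subr0.
  field; exact: p1'.
set jj := j.+2.
have hjj : (2 <= jj)%N by [].
rewrite /ds /Xs /= Cs_rec //.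
have Gc := Gs_closed p jj.
have Gc1 := Gs_closed p jj.+1.
have GE : Gs p jj = (1 - p ^+ jj) / (1 - p).
  by rewrite -Gc; field.
have GE1 : Gs p jj.+1 = (1 - p ^+ jj.+1) / (1 - p).
  by rewrite -Gc1; field.
rewrite GE GE1 /hC.
have hb := bet_gt0 hp (isT : (1 <= jj)%N).
have hb' : bet p jj != 0 by rewrite gt_eqF.
move: hb'; rewrite /bet /jj !addn1 !exprS -!natr1 => hb'.
field; by rewrite p1' hb'.
Qed.

Lemma abel (R : realType) (p : R) (e phi : nat -> R) (n : nat) : 0 < p -> (1 <= n)%N ->
  (forall k, (1 <= k <= n)%N -> 0 <= phi k) ->
  (forall k, (1 <= k < n)%N -> phi k.+1 <= p * phi k) ->
  (forall j, (1 <= j <= n)%N -> 0 <= \sum_(1 <= k < j.+1) e k * p ^+ k.-1) ->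
  phi n / p ^+ n.-1 * \sum_(1 <= k < n.+1) e k * p ^+ k.-1
    <= \sum_(1 <= k < n.+1) e k * phi k.
Proof.
move=> p0; elim: n => [//|n IH] _ hphi hdec hP.
case: n IH hphi hdec hP => [_|m IH] hphi hdec hP.
  by rewrite !big_nat1 /= expr0 !mulr1 divr1 mulrC.
have IH' := IH isT.
have h1 : forall k, (1 <= k <= m.+1)%N -> 0 <= phi k.
  by move=> k /andP[a b]; apply: hphi; rewrite a /=; exact: leq_trans b _.
have h2 : forall k, (1 <= k < m.+1)%N -> phi k.+1 <= p * phi k.
  by move=> k /andP[a b]; apply: hdec; rewrite a /=; exact: leq_trans b _.
have h3 : forall j, (1 <= j <= m.+1)%N -> 0 <= \sum_(1 <= k < j.+1) e k * p ^+ k.-1.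
  by move=> k /andP[a b]; apply: hP; rewrite a /=; exact: leq_trans b _.
have {IH IH'} IH := IH' h1 h2 h3.
have P0 : 0 <= \sum_(1 <= k < m.+2) e k * p ^+ k.-1 by apply: h3; rewrite leqnn.
move: IH P0.
set P := \sum_(1 <= k < m.+2) e k * p ^+ k.-1.
set S := \sum_(1 <= k < m.+2) e k * phi k.
move=> IH P0.
rewrite (big_nat_recr m.+2) // (big_nat_recr m.+2) //= -/P -/S.
have q0 : 0 < p ^+ m by apply: exprn_gt0.
have hb : phi m.+2 <= p * phi m.+1 by apply: hdec; rewrite ltnSn.
have H1 : phi m.+2 / p ^+ m.+1 <= phi m.+1 / p ^+ m.
  rewrite exprS invfM mulrA ler_pM2r ?invr_gt0 //.
  by rewrite ler_pdivrMr // mulrC.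
have H2 := ler_wpM2r P0 H1.
have E : phi m.+2 / p ^+ m.+1 * (P + e m.+2 * p ^+ m.+1) =
   phi m.+2 / p ^+ m.+1 * P + e m.+2 * phi m.+2.
  field; by rewrite expf_neq0 // gt_eqF.
rewrite E; lra.
Qed.

Lemma sumparts (R : realType) (p : R) (phi : nat -> R) (j : nat) : (1 <= j)%N ->
  \sum_(2 <= k < j) (phi k - phi k.+1) * Xs p k + phi j * Xs p j
    = \sum_(1 <= k < j.+1) ds p k * phi k.
Proof.
elim: j => [//|j IH] _.
case: j IH => [_|j IH].
  by rewrite big_geq // big_nat1 /ds /Xs /= subrr !mul0r mulr0 add0r.
case: j IH => [_|j IH].
  rewrite big_geq // big_nat_recr //= big_nat1 /ds /Xs /=; ring.
rewrite big_nat_recr //= [in RHS]big_nat_recr //= -IH //.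
rewrite /ds; ring.
Qed.

Lemma key_core (R : realType) (p : R) (phi : nat -> R) (n : nat) : 0 < p < 1 -> (2 <= n)%N ->
  (forall k, (1 <= k <= n)%N -> 0 <= phi k) ->
  (forall k, (1 <= k < n)%N -> phi k.+1 <= p * phi k) ->
  \sum_(1 <= k < n.+1) phi k = 1 ->
  \sum_(1 <= k < n.+1) ds p k * phi k <= Cs p n - 1.
Proof.
move=> hp hn hphi hdec hsum.
move: (hp) => /andP[p0 p1].
have hn1 : (1 <= n)%N by exact: ltnW.
have A := abel (e := fun k => (Cs p n - 1) - ds p k) p0 hn1 hphi hdec.
have PE : forall j, (1 <= j)%N -> \sum_(1 <= k < j.+1) ((Cs p n - 1) - ds p k) * p ^+ k.-1
      = (Cs p n - Cs p j) * Gs p j.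
  move=> j hj; rewrite (eq_bigr (fun k => (Cs p n - 1) * p ^+ k.-1 - ds p k * p ^+ k.-1));
    last by move=> k _; rewrite mulrBl.
  rewrite sumrB -mulr_sumr -/(Gs p j) ds_ident //; ring.
have Gpos : forall j, 0 <= Gs p j.
  move=> j; rewrite /Gs; apply: sumr_ge0 => k _; apply: exprn_ge0; exact: ltW.
have := A _.
rewrite PE // subrr mul0r mulr0.
rewrite (eq_bigr (fun k => (Cs p n - 1) * phi k - ds p k * phi k));
    last by move=> k _; rewrite mulrBl.
rewrite sumrB -mulr_sumr hsum mulr1 subr_ge0; apply.
move=> j /andP[hj1 hjn]; rewrite PE //; apply: mulr_ge0 => //.
rewrite subr_ge0; exact: Cs_mono.
Qed.

Lemma key (R : realType) (p : R) (phi : nat -> R) (n : nat) : 0 < p < 1 -> (2 <= n)%N ->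
  (forall k, (1 <= k <= n)%N -> 0 <= phi k) ->
  (forall k, (1 <= k < n)%N -> phi k.+1 <= p * phi k) ->
  \sum_(1 <= k < n.+1) phi k = 1 ->
  1 + \sum_(2 <= k < n) (phi k - phi k.+1) * Xs p k <= Cs p n * (1 - n%:R * phi n).
Proof.
move=> hp hn hphi hdec hsum.
have := key_core hp hn hphi hdec hsum.
have hn1 : (1 <= n)%N by exact: ltnW.
rewrite -(sumparts p phi hn1) /Xs ifF; last by case: n hn {hn1 hphi hdec hsum} => [|[]].
move=> H; rewrite mulrBr mulr1; lra.
Qed.

Lemma key_eq (R : realType) (p : R) (phi : nat -> R) (c : R) (n : nat) : 0 < p < 1 -> (2 <= n)%N ->
  (forall k, (1 <= k <= n)%N -> phi k = c * p ^+ k.-1) ->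
  \sum_(1 <= k < n.+1) phi k = 1 ->
  1 + \sum_(2 <= k < n) (phi k - phi k.+1) * Xs p k = Cs p n * (1 - n%:R * phi n).
Proof.
move=> hp hn hphi hsum.
have hn1 : (1 <= n)%N by exact: ltnW.
have T : \sum_(1 <= k < n.+1) ds p k * phi k = Cs p n - 1.
  rewrite (eq_big_nat _ _ (F2 := fun k => c * (ds p k * p ^+ k.-1))); last first.
    by move=> k hk; rewrite hphi // mulrCA.
  rewrite -mulr_sumr ds_ident //.
  move: hsum; rewrite (eq_big_nat _ _ (F2 := fun k => c * p ^+ k.-1)) //.
  by rewrite -mulr_sumr -/(Gs p n) => H; rewrite mulrCA H mulr1.
have := sumparts p phi hn1.
rewrite T /Xs ifF; last by case: n hn {hn1 hphi hsum T} => [|[]].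
move=> H; rewrite mulrBr mulr1; lra.
Qed.



Definition alph (R : realType) (K : nat) (f : pref R K) (r : nat) : R :=
  (K - r + 1)%:R / (1 - (K - r + 1)%:R * F f (K - r + 1) (K - r + 1)).

Fixpoint Vf (R : realType) (K : nat) (f : pref R K) (fuel i : nat) : R :=
  match fuel with
  | 0 => 1
  | fu.+1 => 1 + \sum_(i.+1 <= r < K) Delta f i r * alph f r * Vf f fu r
  end.

Definition Vv (R : realType) (K : nat) (f : pref R K) (i : nat) : R := Vf f (K - i) i.

Lemma Vf_stab (R : realType) (K : nat) (f : pref R K) (m m' i : nat) :
  (K - i <= m)%N -> (K - i <= m')%N -> Vf f m i = Vf f m' i.
Proof.
elim: m m' i => [|m IH] [|m'] i h h' //=.
- by rewrite big_geq ?addr0 //; lia.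
- by rewrite big_geq ?addr0 //; lia.
- congr (_ + _); apply: eq_big_nat => r hr; congr (_ * _); apply: IH; lia.
Qed.

Lemma V_rec (R : realType) (K : nat) (f : pref R K) (i : nat) : (i < K)%N ->
  Vv f i = 1 + \sum_(i.+1 <= r < K) Delta f i r * alph f r * Vv f r.
Proof.
move=> hi; rewrite /Vv; case E: (K - i)%N => [|m]; first lia.
rewrite /=; congr (_ + _); apply: eq_big_nat => r hr; congr (_ * _); apply: Vf_stab; lia.
Qed.

Lemma Dtab_stab (R : realType) (K : nat) (f : pref R K) (n i : nat) :
  (1 <= i <= n)%N -> Dtab f n i = D f i.
Proof.
elim: n => [|n IH] hi; first lia.
rewrite /=; case: ifP => h; first by apply: IH; lia.
have -> : i = n.+1 by lia.
by rewrite /D /= ltnn.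
Qed.

Lemma D_1 (R : realType) (K : nat) (f : pref R K) : D f 1 = 1 / (1 - K%:R * F f K K).
Proof. by []. Qed.

Lemma D_rec (R : realType) (K : nat) (f : pref R K) (r : nat) : (2 <= r)%N ->
  D f r = alph f r * \sum_(1 <= i < r) Delta f i r * D f i.
Proof.
case: r => [//|r] hr; rewrite /D /= ltnn /Dstep /= ifF; last by case: r hr.
rewrite /alph mulrAC; congr (_ * _); apply: eq_big_nat => i hi.
congr (_ * _); apply: Dtab_stab; lia.
Qed.

Lemma tri_exch (R : realType) (G : nat -> nat -> R) (a b : nat) :
  \sum_(a <= r < b) \sum_(r.+1 <= s < b) G r s = \sum_(a <= s < b) \sum_(a <= r < s) G r s.
Proof.
elim: b => [|b IH]; first by rewrite !big_geq.
case: (leqP a b) => hab; last by rewrite !big_geq.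
rewrite big_nat_recr //= [in RHS]big_nat_recr //= -IH [X in _ + X = _]big_geq // addr0.
rewrite -big_split /=; apply: eq_big_nat => r hr; rewrite big_nat_recr //; lia.
Qed.

Lemma duality (R : realType) (K : nat) (f : pref R K) : (2 <= K)%N ->
  \sum_(1 <= r < K) D f r = D f 1 * Vv f 1.
Proof.
move=> hK.
have E1 : \sum_(1 <= r < K) D f r * Vv f r =
   \sum_(1 <= r < K) D f r + \sum_(1 <= r < K) \sum_(r.+1 <= s < K)
        D f r * (Delta f r s * alph f s * Vv f s).
  rewrite -big_split /=; apply: eq_big_nat => r hr.
  by rewrite V_rec; [rewrite mulrDr mulr1 mulr_sumr | lia].
have E2 : \sum_(1 <= r < K) \sum_(r.+1 <= s < K) D f r * (Delta f r s * alph f s * Vv f s)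
   = \sum_(2 <= s < K) D f s * Vv f s.
  rewrite tri_exch big_ltn // [X in X + _]big_geq // add0r.
  apply: eq_big_nat => s hs; rewrite D_rec; last lia.
  rewrite mulr_sumr mulr_suml; apply: eq_big_nat => r hr; ring.
move: E1; rewrite E2 big_ltn //; move=> E1.
have : D f 1 * Vv f 1 = \sum_(1 <= r < K) D f r by rewrite -[LHS]addr0; lra.
by move=> ->.
Qed.



Lemma reindex_K (R : realType) (G : nat -> R) (K r : nat) : (1 <= r < K)%N ->
  \sum_(r.+1 <= s < K) G (K - s + 1)%N = \sum_(2 <= k < K - r + 1) G k.
Proof.
move=> hr.
rewrite big_nat_rev /=.
rewrite (eq_big_nat _ _ (F2 := fun s => G (s - r + 1)%N)); last first.
  move=> s hs; congr G; lia.
have -> : r.+1 = (2 + (r - 1))%N by lia.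
rewrite big_addn; have -> : (K - (r - 1) = K - r + 1)%N by lia.
apply: eq_big_nat => i hi; congr G; lia.
Qed.

Lemma F_ord (R : realType) (K : nat) (f : pref R K) (m : nat) (i : 'I_K) :
  F f m i.+1 = f (prefix_set K m) i.
Proof. by rewrite /F /= valK. Qed.

Lemma card_prefix (K m : nat) : (m <= K)%N -> #|prefix_set K m| = m.
Proof.
move=> hm; rewrite -sum1_card.
rewrite (eq_bigl (fun i : 'I_K => (i < m)%N)); last by move=> i; rewrite inE.
by rewrite -(big_ord_widen _ (fun _ => 1%N) hm) sum1_card card_ord.
Qed.

Lemma sum_prefix (R : realType) (K : nat) (f : pref R K) (m : nat) : (m <= K)%N ->
  \sum_(i in prefix_set K m) f (prefix_set K m) i = \sum_(1 <= k < m.+1) F f m k.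
Proof.
move=> hm.
rewrite (eq_bigl (fun i : 'I_K => (i < m)%N)); last by move=> i; rewrite inE.
rewrite (eq_bigr (fun i : 'I_K => F f m (nat_of_ord i).+1)); last by move=> i _; rewrite F_ord.
rewrite -(big_ord_widen _ (fun k => F f m k.+1) hm) big_add1 /= big_mkord.
by [].
Qed.


Lemma Fpos (R : realType) (K : nat) (p : R) (f : pref R K) (m k : nat) :
  in_Mp_id p f -> (2 <= m <= K)%N -> (1 <= k <= m)%N -> 0 < F f m k.
Proof.
case=> h1 _ _ hm hk.
case: k hk => [//|k] hk.
have hkK : (k < K)%N by lia.
have -> : F f m k.+1 = f (prefix_set K m) (Ordinal hkK) by rewrite -F_ord.
apply/(h1 _ _ _).2; first by rewrite card_prefix; lia.
rewrite inE /=; lia.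
Qed.

Lemma Fdec (R : realType) (K : nat) (p : R) (f : pref R K) (m k : nat) :
  in_Mp_id p f -> (2 <= m <= K)%N -> (1 <= k < m)%N -> F f m k.+1 <= p * F f m k.
Proof.
case=> _ _ h3 hm hk.
case: k hk => [//|k] hk.
have hkK : (k < K)%N by lia.
have hkK' : (k.+1 < K)%N by lia.
have -> : F f m k.+1 = f (prefix_set K m) (Ordinal hkK) by rewrite -F_ord.
have -> : F f m k.+2 = f (prefix_set K m) (Ordinal hkK') by rewrite -F_ord.
apply: h3; first by rewrite card_prefix; lia.
- rewrite inE /=; lia.
- rewrite inE /=; lia.
- by rewrite !perm1 /=.
Qed.

Lemma Fsum (R : realType) (K : nat) (p : R) (f : pref R K) (m : nat) :
  in_Mp_id p f -> (2 <= m <= K)%N -> \sum_(1 <= k < m.+1) F f m k = 1.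
Proof.
case=> _ h2 _ hm; rewrite -sum_prefix; last lia.
apply: h2; rewrite card_prefix; lia.
Qed.

Lemma Fmono (R : realType) (K : nat) (p : R) (f : pref R K) (m j k : nat) :
  0 < p < 1 -> in_Mp_id p f -> (2 <= m <= K)%N -> (1 <= k <= j)%N -> (j <= m)%N ->
  F f m j <= F f m k.
Proof.
move=> /andP[p0 p1] hf hm hk; elim: j hk => [|j IH] hk hj; first lia.
case: (ltnP k j.+1) => h; last by have -> : j.+1 = k by lia.
apply: le_trans (IH _ _); last lia; last lia.
have := Fdec hf hm (_ : (1 <= j < m)%N); have := Fpos hf hm (_ : (1 <= j <= m)%N).
move=> A B; have a := A ltac:(lia); have b := B ltac:(lia); nra.
Qed.

Lemma Fden (R : realType) (K : nat) (p : R) (f : pref R K) (m : nat) :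
  0 < p < 1 -> in_Mp_id p f -> (2 <= m <= K)%N -> 0 < 1 - m%:R * F f m m.
Proof.
move=> hp hf hm; move: (hp) => /andP[p0 p1].
rewrite -[X in 0 < X - _](Fsum hf hm) subr_gt0.
have -> : m%:R * F f m m = \sum_(1 <= k < m.+1) F f m m.
  by rewrite sumr_const_nat subSS subn0 mulr_natl.
rewrite big_ltn; last lia; rewrite [X in _ < X]big_ltn; last lia.
have h21 : F f m m < F f m 1.
  have a := Fdec hf hm (_ : (1 <= 1 < m)%N); have b := Fpos hf hm (_ : (1 <= 1 <= m)%N).
  have c := Fmono hp hf hm (_ : (1 <= 2 <= m)%N) (leqnn m).
  have a' := a ltac:(lia); have b' := b ltac:(lia); have c' := c ltac:(lia).
  nra.
apply: ltr_leD => //; apply: ler_sum_nat => k hk; apply: (Fmono hp hf hm); lia.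
Qed.

Lemma Delta_eq (R : realType) (K : nat) (f : pref R K) (r s : nat) :
  Delta f r s = F f (K - r + 1) (K - s + 1) - F f (K - r + 1) (K - s + 1).+1.
Proof. by rewrite /Delta; have -> : (K - s + 2 = (K - s + 1).+1)%N by lia. Qed.

Lemma alph_gt0 (R : realType) (K : nat) (p : R) (f : pref R K) (r : nat) :
  0 < p < 1 -> in_Mp_id p f -> (1 <= r < K)%N -> 0 < alph f r.
Proof.
move=> hp hf hr; rewrite /alph; apply: divr_gt0; first by rewrite ltr0n; lia.
apply: (Fden hp hf); lia.
Qed.

Lemma Delta_ge0 (R : realType) (K : nat) (p : R) (f : pref R K) (r s : nat) :
  0 < p < 1 -> in_Mp_id p f -> (1 <= r)%N -> (r < s < K)%N -> 0 <= Delta f r s.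
Proof.
move=> hp hf hr hs; move: (hp) => /andP[p0 p1]; rewrite Delta_eq subr_ge0.
have a := Fdec hf (_ : (2 <= K - r + 1 <= K)%N) (_ : (1 <= K - s + 1 < K - r + 1)%N).
have b := Fpos hf (_ : (2 <= K - r + 1 <= K)%N) (_ : (1 <= K - s + 1 <= K - r + 1)%N).
have a' := a ltac:(lia) ltac:(lia); have b' := b ltac:(lia) ltac:(lia).
nra.
Qed.

Lemma Wbound (R : realType) (K : nat) (p : R) (f : pref R K) :
  0 < p < 1 -> in_Mp_id p f -> forall t r, (1 <= r < K)%N -> (K - r <= t)%N ->
  1 <= Vv f r /\ alph f r * Vv f r <= Xs p (K - r + 1).
Proof.
move=> hp hf; elim=> [|t IH] r hr ht; first lia.
have IH' : forall s, (r < s < K)%N -> 1 <= Vv f s /\ alph f s * Vv f s <= Xs p (K - s + 1).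
  move=> s hs; apply: IH; lia.
set n := (K - r + 1)%N.
have hn : (2 <= n <= K)%N by rewrite /n; lia.
have VE := V_rec f (_ : (r < K)%N); have {}VE := VE ltac:(lia).
have V1 : 1 <= Vv f r.
  rewrite VE lerDl big_nat_cond; apply: sumr_ge0 => s /andP[hs _].
  have [a b] := IH' s ltac:(lia).
  rewrite -mulrA; apply: mulr_ge0; first by apply: (Delta_ge0 hp hf); lia.
  apply: mulr_ge0; first by apply: ltW; apply: (alph_gt0 hp hf); lia.
  by apply: le_trans a; exact: ler01.
split => //.
have Vle : Vv f r <= 1 + \sum_(2 <= k < n) (F f n k - F f n k.+1) * Xs p k.
  rewrite VE lerD2l /n -(reindex_K (fun k => (F f (K - r + 1) k - F f (K - r + 1) k.+1) * Xs p k)); last by lia.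
  apply: ler_sum_nat => s hs.
  have [a b] := IH' s hs.
  have d0 : 0 <= Delta f r s.
    apply: (Delta_ge0 hp hf); [by case/andP: hr | exact: hs].
  rewrite -mulrA; move: d0; rewrite (Delta_eq f r s) => d0.
  by apply: ler_wpM2l.
have Kk := key hp (_ : (2 <= n)%N) (fun k hk => ltW (Fpos hf hn hk))
   (fun k hk => Fdec hf hn hk) (Fsum hf hn).
have {}Kk := Kk ltac:(lia).
have dn := Fden hp hf hn.
have H := le_trans Vle Kk.
have a0 : 0 <= n%:R / (1 - n%:R * F f n n) by apply: divr_ge0; [exact: ler0n | exact: ltW].
have := ler_wpM2l a0 H.
have -> : n%:R / (1 - n%:R * F f n n) * (Cs p n * (1 - n%:R * F f n n)) = Xs p n.
  rewrite /Xs ifF; last lia.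
  by field; rewrite gt_eqF.
by rewrite /alph -/n.
Qed.



Definition rk (K : nat) (S : {set 'I_K}) (i : 'I_K) : nat := #|[set j in S | (j < i)%N]|.

Lemma lrank1 (K : nat) (S : {set 'I_K}) (i : 'I_K) : local_rank 1%g S i = (rk S i).+1.
Proof.
rewrite /local_rank /rk add1n; congr (_.+1); apply: eq_card => j.
by rewrite !inE !perm1.
Qed.

Lemma sumrk (R : realType) (p : R) (K : nat) (n : nat) (S : {set 'I_K}) :
  #|S| = n -> \sum_(i in S) p ^+ rk S i = Gs p n.
Proof.
elim: n S => [|n IH] S hS.
  by rewrite (cards0_eq hS) big_set0 /Gs big_geq.
have : (0 < #|S|)%N by rewrite hS.
case/card_gt0P => i0 i0S.
have [m mS mmax] : exists2 m : 'I_K, m \in S & forall j, j \in S -> (j <= m)%N.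
  case: (@arg_maxnP _ i0 (fun i => i \in S) (fun i => nat_of_ord i) i0S) => m mS mmax.
  by exists m.
have hS' : #|S :\ m| = n by move: hS; rewrite (cardsD1 m) mS add1n => -[].
rewrite (bigD1 m) //=.
have -> : rk S m = n.
  rewrite /rk -hS'; apply: eq_card => j; rewrite !inE.
  case jS: (j \in S) => /=; last by rewrite andbF.
  by rewrite ltn_neqAle (mmax j jS) !andbT val_eqE.
rewrite (eq_bigr (fun i => p ^+ rk (S :\ m) i)); last first.
  move=> i /andP[iS im]; congr (_ ^+ _); rewrite /rk.
  rewrite (_ : [set j in S | (j < i)%N] = [set j in S :\ m | (j < i)%N]) //.
  apply/setP => j; rewrite !inE; case: (eqVneq j m) => [->|] /=.
    by rewrite ltnNge (mmax i iS) andbF.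
  by [].
rewrite (eq_bigl (fun i => i \in S :\ m)); last by move=> i; rewrite !inE andbC.
by rewrite IH // /Gs [in RHS]big_nat_recr //= addrC.
Qed.

Lemma fOA_in (R : realType) (K : nat) (p : R) : 0 < p < 1 -> in_Mp_id p (fOA K p 1%g).
Proof.
move=> hp; move: (hp) => /andP[p0 p1].
have cpos : forall S : {set 'I_K}, (2 <= #|S|)%N -> 0 < (1 - p) / (1 - p ^+ #|S|).
  move=> S hS; apply: divr_gt0; first lra.
  rewrite subr_gt0 exprn_ilt1 ?(ltW p0) //; by case: #|S| hS.
split.
- move=> S hS i; rewrite /fOA; case: (boolP (i \in S)) => iS; split => //.
  + move=> _; apply: mulr_gt0; first exact: cpos.
    exact: exprn_gt0.
  + by rewrite ltxx.
- move=> S hS; rewrite /fOA.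
  rewrite (eq_bigr (fun i => (1 - p) / (1 - p ^+ #|S|) * p ^+ rk S i)); last first.
    by move=> i iS; rewrite iS lrank1.
  rewrite -mulr_sumr (sumrk p (erefl #|S|)) -(Gs_closed p #|S|).
  field; apply/andP; split; last by apply/eqP; lra.
  have h1 : 0 < (1 - p) * Gs p #|S|.
    by rewrite Gs_closed subr_gt0 exprn_ilt1 ?(ltW p0) //; case: #|S| hS.
  have h2 : 0 < 1 - p by lra.
  by rewrite (pmulr_rgt0 _ h2) in h1; rewrite gt_eqF.
- move=> S hS i i' iS i'S; rewrite !perm1 => hii.
  rewrite /fOA iS i'S !lrank1 /= mulrCA.
  apply: ler_wpM2l; first exact: ltW (cpos S hS).
  rewrite -exprS; apply: ler_wiXn2l; [exact: ltW | exact: ltW |].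
  apply: proper_card; apply/properP; split.
    apply/subsetP => j; rewrite !inE => /andP[-> h] /=; exact: ltn_trans h hii.
  by exists i'; rewrite !inE ?i'S ?ltnn //= andbF.
Qed.



Lemma F_OA (R : realType) (K : nat) (p : R) (m k : nat) : (2 <= m <= K)%N -> (1 <= k <= m)%N ->
  F (fOA K p 1%g) m k = (1 - p) / (1 - p ^+ m) * p ^+ k.-1.
Proof.
move=> hm hk; case: k hk => [//|k] hk.
have hkK : (k < K)%N by lia.
rewrite -[k.+1]/(nat_of_ord (Ordinal hkK)).+1 F_ord /fOA inE /=.
rewrite ifT; last lia.
rewrite card_prefix; last lia.
have hkK' : (k <= K)%N by lia.
congr (_ * _ ^+ _); rewrite add0n -[RHS](card_prefix hkK'); apply: eq_card => j.
rewrite !inE !perm1 /=; case: (ltnP j k) => h; rewrite ?andbT ?andbF //; lia.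
Qed.

Lemma Wequal (R : realType) (K : nat) (p : R) :
  0 < p < 1 -> forall t r, (1 <= r < K)%N -> (K - r <= t)%N ->
  alph (fOA K p 1%g) r * Vv (fOA K p 1%g) r = Xs p (K - r + 1).
Proof.
move=> hp; have hf := fOA_in K hp; set f := fOA K p 1%g.
elim=> [|t IH] r hr ht; first lia.
have IH' : forall s, (r < s < K)%N -> alph f s * Vv f s = Xs p (K - s + 1).
  move=> s hs; apply: IH; lia.
set n := (K - r + 1)%N.
have hn : (2 <= n <= K)%N by rewrite /n; lia.
have VE := V_rec f (_ : (r < K)%N); have {}VE := VE ltac:(lia).
have Ve : Vv f r = 1 + \sum_(2 <= k < n) (F f n k - F f n k.+1) * Xs p k.
  rewrite VE /n -(reindex_K (fun k => (F f (K - r + 1) k - F f (K - r + 1) k.+1) * Xs p k)); last by lia.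
  congr (_ + _); apply: eq_big_nat => s hs.
  by rewrite -mulrA IH' // (Delta_eq f r s).
have Ke := key_eq (c := (1 - p) / (1 - p ^+ n)) hp (_ : (2 <= n)%N)
   (fun k hk => F_OA p hn hk) (Fsum hf hn).
have {}Ke := Ke ltac:(lia).
have dn := Fden hp hf hn.
rewrite Ve Ke /alph -/n /Xs ifF; last lia.
by field; rewrite gt_eqF.
Qed.

Lemma CKp_Cs (R : realType) (K : nat) (p : R) : (2 <= K)%N -> CKp K p = Cs p K.
Proof.
move=> hK; rewrite /CKp /Cs ifF; last lia.
congr (_ + _).
rewrite (eq_big_nat _ _ (F2 := fun r => hC p (K - r))) //.
rewrite big_nat_rev /=.
rewrite (eq_big_nat _ _ (F2 := fun r => hC p r.+1)); last by move=> r hr; congr hC; lia.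
by rewrite [in RHS]big_add1 subn1.
Qed.

Definition sig (R : realType) (p : R) (j : nat) : R := \sum_(1 <= k < j) k%:R * p ^+ k.-1.

Lemma bet_sig (R : realType) (p : R) (m : nat) : bet p m = (1 - p) ^+ 2 * sig p m.+1.
Proof.
elim: m => [|m IH]; first by rewrite /bet /sig big_geq //=; ring.
have E : bet p m.+1 = bet p m + (m.+1)%:R * p ^+ m * (1 - p) ^+ 2.
  rewrite /bet !addn1 !exprS -!natr1; ring.
by rewrite E IH /sig [in RHS]big_nat_recr //=; ring.
Qed.

Lemma Cs_alt (R : realType) (p : R) (K : nat) : 0 < p < 1 -> (2 <= K)%N ->
  (1 - p) * Cs p K = 1 + \sum_(2 <= j < K.+1) p ^+ j.-1 / sig p j.
Proof.
move=> hp; move: (hp) => /andP[p0 p1].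
elim: K => [//|K IH] hK.
case: K IH hK => [//|K] IH hK.
case: K IH hK => [|K] IH hK.
  rewrite Cs2 big_nat1 /sig big_nat1 /= mul1r expr1 divr1; field; apply/eqP; lra.
rewrite Cs_rec // mulrDr IH // [in RHS]big_nat_recr //= addrA; congr (_ + _).
have hb := bet_gt0 hp (_ : (1 <= K.+2)%N); have {}hb := hb isT.
move: (hb); rewrite bet_sig => hs.
have hs' : sig p K.+3 != 0.
  apply/eqP => E; move: hs; rewrite E mulr0; lra.
rewrite /hC -/(bet p K.+2) bet_sig; field; apply/andP; split => //; apply/eqP; lra.
Qed.

Lemma Ssum (R : realType) (K : nat) (p : R) (f : pref R K) : 0 < p < 1 -> in_Mp_id p f ->
  (2 <= K)%N -> \sum_(1 <= r < K) D f r = alph f 1 * Vv f 1 / K%:R.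
Proof.
move=> hp hf hK; rewrite duality // D_1 /alph subnK; last lia.
have dn := Fden hp hf (_ : (2 <= K <= K)%N); have {}dn := dn ltac:(lia).
have k0 : K%:R != 0 :> R by rewrite pnatr_eq0; lia.
by field; rewrite k0 gt_eqF.
Qed.

Theorem mainTheorem5 (R : realType) (K : nat) (p : R) :
  (2 <= K)%N -> 0 < p < 1 ->
  [/\ (forall f : pref R K, in_Mp_id p f -> \sum_(1 <= r < K) D f r <= CKp K p),
      \sum_(1 <= r < K) D (fOA K p 1%g) r = CKp K p,
      in_Mp_id p (fOA K p 1%g) /\
        (forall f : pref R K, in_Mp_id p f -> IN p (fOA K p 1%g) <= IN p f),
      IN p (fOA K p 1%g) = ln (1 / p) / CKp K p &
      ln (1 / p) / CKp K p
        = (1 - p) * ln (1 / p)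
          * (1 + \sum_(2 <= j < K.+1)
                   p ^+ j.-1 / (\sum_(1 <= k < j) k%:R * p ^+ k.-1))^-1].
Proof.
move=> hK hp; move: (hp) => /andP[p0 p1].
have hf0 := fOA_in K hp.
have k0 : (0 : R) < K%:R by rewrite ltr0n; lia.
have hXK : Xs p (K - 1 + 1) = K%:R * Cs p K by rewrite subnK /Xs ?ifF //; lia.
have bound : forall f : pref R K, in_Mp_id p f ->
    0 < \sum_(1 <= r < K) D f r /\ \sum_(1 <= r < K) D f r <= CKp K p.
  move=> f hf; rewrite (Ssum hp hf) // CKp_Cs //.
  have [V1 W1] := Wbound hp hf (t := (K - 1)%N) (r := 1%N) ltac:(lia) (leqnn _).
  have a1 := alph_gt0 hp hf (_ : (1 <= 1 < K)%N); have {}a1 := a1 ltac:(lia).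
  split.
    apply: divr_gt0 => //; apply: mulr_gt0 => //; apply: lt_le_trans V1; exact: ltr01.
  by rewrite ler_pdivrMr // mulrC [X in _ <= X]mulrC -hXK mulrC.
have eqOA : \sum_(1 <= r < K) D (fOA K p 1%g) r = CKp K p.
  have We := @Wequal _ K _ hp (K - 1)%N 1%N ltac:(lia) (leqnn _).
  rewrite (Ssum hp hf0) // CKp_Cs // We.
  by rewrite hXK; field; rewrite gt_eqF.
have ln0 : 0 < ln (1 / p) by apply: ln_gt0; rewrite div1r invf_gt1.
have C0 : 0 < CKp K p by rewrite -eqOA; exact: (bound _ hf0).1.
split.
- by move=> f hf; exact: (bound f hf).2.
- exact: eqOA.
- split => // f hf; rewrite /IN eqOA.
  have [S0 SC] := bound f hf.
  apply: ler_wpM2l; first exact: ltW.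
  by rewrite lef_pV2 ?posrE.
- by rewrite /IN eqOA.
- rewrite -(Cs_alt hp hK) -/(sig p _) CKp_Cs //.
  have Cp : 0 < Cs p K by rewrite -CKp_Cs.
  by field; rewrite !gt_eqF //; lra.
Qed.
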